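(* Let $k$ be a field. Every nondegenerate variety of representations of groups over $k$ is an IBN-variety.
   Context: A representation of a group over $k$ is a two-sorted algebra ($\Gamma=\{1,2\}$): sort 1 is a group $G$ (operations: multiplication, inverse, constant $1$), sort 2 is a $k$-vector space $V$ (operations $+,0,-$ and a unary scalar multiplication by each $\lambda\in k$), and there is an action $\circ$ of type $(1,2;2)$ satisfying $g\circ(u+v)=g\circ u+g\circ v$, $g\circ(\lambda v)=\lambda(g\circ v)$, $(gh)\circ v=g\circ(h\circ v)$, $1\circ v=v$. A variety of representations of groups is a class of such representations defined by (two-sorted) identities. A two-sorted variety is nondegenerate if neither $x^{(1)}_1=x^{(1)}_2$ nor $x^{(2)}_1=x^{(2)}_2$ is an identity of it. It is an IBN-variety if for any free algebras $F(Y),F(Z)$ of the variety with finite free generating sets $Y=Y^{(1)}\uplus Y^{(2)}$, $Z=Z^{(1)}\uplus Z^{(2)}$ (split by sort), $F(Y)\cong F(Z)$ implies $|Y^{(1)}|=|Z^{(1)}|$ and $|Y^{(2)}|=|Z^{(2)}|$. *)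

(* Defs.v *)
From HB Require Import structures.
From mathcomp Require Import all_boot all_algebra.
Set Implicit Arguments. Unset Strict Implicit. Unset Printing Implicit Defensive.
Import GRing.Theory.
Local Open Scope ring_scope.

(* A representation of a group over k: sort 1 = group G, sort 2 = k-vector space V. *)
Record rep (k : fieldType) := Rep {
  G : Type;
  gmul : G -> G -> G;
  ginv : G -> G;
  gone : G;
  gmulA : forall x y z, gmul x (gmul y z) = gmul (gmul x y) z;
  gmul1g : forall x, gmul gone x = x;
  gmulg1 : forall x, gmul x gone = x;
  gmulVg : forall x, gmul (ginv x) x = gone;
  gmulgV : forall x, gmul x (ginv x) = gone;
  V : lmodType k;
  act : G -> V -> V;
  actD : forall g (u v : V), act g (u + v) = act g u + act g v;
  actZ : forall g (l : k) (v : V), act g (l *: v) = l *: act g v;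
  actM : forall g h (v : V), act (gmul g h) v = act g (act h v);
  act1 : forall v : V, act gone v = v
}.

Inductive gterm : Type :=
  | GVar of nat | GMul of gterm & gterm | GInv of gterm | GOne.

Inductive vterm (k : fieldType) : Type :=
  | VVar of nat
  | VAdd of vterm k & vterm k
  | VZero
  | VOpp of vterm k
  | VScale of k & vterm k
  | VAct of gterm & vterm k.

Inductive identity (k : fieldType) : Type :=
  | IdG of gterm & gterm
  | IdV of vterm k & vterm k.

Fixpoint geval k (A : rep k) (e1 : nat -> G A) (t : gterm) : G A :=
  match t with
  | GVar i => e1 i
  | GMul s u => gmul (geval e1 s) (geval e1 u)
  | GInv s => ginv (geval e1 s)
  | GOne => gone A
  end.

Fixpoint veval k (A : rep k) (e1 : nat -> G A) (e2 : nat -> V A) (t : vterm k) : V A :=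
  match t with
  | VVar i => e2 i
  | VAdd s u => veval e1 e2 s + veval e1 e2 u
  | VZero => 0
  | VOpp s => - veval e1 e2 s
  | VScale l s => l *: veval e1 e2 s
  | VAct g s => act (geval e1 g) (veval e1 e2 s)
  end.

Definition holds k (A : rep k) (i : identity k) : Prop :=
  match i with
  | IdG s t => forall (e1 : nat -> G A), geval e1 s = geval e1 t
  | IdV s t => forall (e1 : nat -> G A) (e2 : nat -> V A), veval e1 e2 s = veval e1 e2 t
  end.

Definition in_variety k (Ids : identity k -> Prop) (A : rep k) : Prop :=
  forall i, Ids i -> holds A i.

Definition is_identity_of k (Ids : identity k -> Prop) (i : identity k) : Prop :=
  forall A : rep k, in_variety Ids A -> holds A i.

Definition nondegenerate_variety k (Ids : identity k -> Prop) : Prop :=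
  ~ is_identity_of Ids (IdG k (GVar 0) (GVar 1)) /\
  ~ is_identity_of Ids (IdV (VVar k 0) (VVar k 1)).

Definition is_hom k (A B : rep k) (h1 : G A -> G B) (h2 : V A -> V B) : Prop :=
  (forall x y, h1 (gmul x y) = gmul (h1 x) (h1 y)) /\
  (forall x, h1 (ginv x) = ginv (h1 x)) /\
  h1 (gone A) = gone B /\
  (forall u v, h2 (u + v) = h2 u + h2 v) /\
  h2 0 = 0 /\
  (forall v, h2 (- v) = - h2 v) /\
  (forall (l : k) v, h2 (l *: v) = l *: h2 v) /\
  (forall g v, h2 (act g v) = act (h1 g) (h2 v)).

Definition rep_iso k (A B : rep k) : Prop :=
  exists (h1 : G A -> G B) (h2 : V A -> V B) (h1' : G B -> G A) (h2' : V B -> V A),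
    is_hom h1 h2 /\ is_hom h1' h2' /\
    (forall x, h1' (h1 x) = x) /\ (forall y, h1 (h1' y) = y) /\
    (forall v, h2' (h2 v) = v) /\ (forall w, h2 (h2' w) = w).

(* F is a free algebra of the variety with free generating set
   Y = Y1 (+) Y2, where Y1 = {y1 i | i < m} (m distinct elements of sort 1)
   and Y2 = {y2 j | j < n} (n distinct elements of sort 2). *)
Definition is_free k (Ids : identity k -> Prop) (F : rep k) (m n : nat)
    (y1 : 'I_m -> G F) (y2 : 'I_n -> V F) : Prop :=
  in_variety Ids F /\ injective y1 /\ injective y2 /\
  forall (A : rep k), in_variety Ids A ->
  forall (f1 : 'I_m -> G A) (f2 : 'I_n -> V A),
    (exists (h1 : G F -> G A) (h2 : V F -> V A),
        is_hom h1 h2 /\ (forall i, h1 (y1 i) = f1 i) /\ (forall j, h2 (y2 j) = f2 j)) /\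
    (forall (h1 h1' : G F -> G A) (h2 h2' : V F -> V A),
        is_hom h1 h2 -> is_hom h1' h2' ->
        (forall i, h1 (y1 i) = f1 i) -> (forall j, h2 (y2 j) = f2 j) ->
        (forall i, h1' (y1 i) = f1 i) -> (forall j, h2' (y2 j) = f2 j) ->
        (forall x, h1 x = h1' x) /\ (forall v, h2 v = h2' v)).

Arguments is_free {k} Ids F m n y1 y2.

Definition IBN_variety k (Ids : identity k -> Prop) : Prop :=
  forall (F F' : rep k) (m n m' n' : nat)
    (y1 : 'I_m -> G F) (y2 : 'I_n -> V F) (z1 : 'I_m' -> G F') (z2 : 'I_n' -> V F'),
    is_free Ids F m n y1 y2 -> is_free Ids F' m' n' z1 z2 -> rep_iso F F' ->
    m = m' /\ n = n'.

(* Main.v *)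
Require Import Defs.
From mathcomp Require Import all_boot all_algebra.
From Stdlib Require Import Classical ClassicalEpsilon.
From mathcomp Require Import zify ring.
Set Implicit Arguments. Unset Strict Implicit. Unset Printing Implicit Defensive.
Import GRing.Theory.

Section Aux.
Local Open Scope ring_scope.

Lemma gcancel_r k (A : rep k) (a b c : G A) : gmul a c = gmul b c -> a = b.
Proof.
move=> H; rewrite -(gmulg1 a) -(gmulgV c) gmulA H -gmulA gmulgV gmulg1 //.
Qed.

Lemma ginv_uniq k (A : rep k) (a b : G A) : gmul a b = gone A -> a = ginv b.
Proof. move=> H; by rewrite -(gmulg1 a) -(gmulgV b) gmulA H gmul1g. Qed.

Lemma ginv1 k (A : rep k) : ginv (gone A) = gone A.
Proof. by rewrite -[RHS](gmulVg (gone A)) gmulg1. Qed.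

Lemma geval_morph k (A B : rep k) (h : G A -> G B) :
  (forall x y, h (gmul x y) = gmul (h x) (h y)) -> (forall x, h (ginv x) = ginv (h x)) ->
  h (gone A) = gone B -> forall e t, h (geval e t) = geval (fun i => h (e i)) t.
Proof.
move=> hM hV h1 e; elim=> [i|s IHs u IHu|s IHs|] //=; by rewrite ?hM ?hV ?IHs ?IHu.
Qed.

Lemma veval_morph k (A B : rep k) (h1 : G A -> G B) h2 : is_hom h1 h2 ->
  forall e1 e2 t, h2 (veval e1 e2 t) = veval (fun i => h1 (e1 i)) (fun i => h2 (e2 i)) t.
Proof.
move=> [hM [hV [h1e [hD [h0 [hN [hZ hA]]]]]]] e1 e2.
elim=> [i|s IHs u IHu||s IHs|l s IHs|g s IHs] //=;
  by rewrite ?hD ?h0 ?hN ?hZ ?hA ?IHs ?IHu ?geval_morph.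
Qed.

Lemma variety_embed k Ids (A B : rep k) (h1 : G B -> G A) h2 : is_hom h1 h2 ->
  injective h1 -> injective h2 -> in_variety Ids A -> in_variety Ids B.
Proof.
move=> hh i1 i2 HA [s t|s t] /(HA _) /= H.
- move=> e1; apply: i1; case: hh => [hM [hV [h1e _]]].
  by rewrite !(geval_morph hM hV h1e); apply: H.
- by move=> e1 e2; apply: i2; rewrite !(veval_morph hh); apply: H.
Qed.

Lemma hom_comp k (A B C : rep k) (h1 : G A -> G B) h2 (k1 : G B -> G C) k2 :
  is_hom h1 h2 -> is_hom k1 k2 -> is_hom (fun x => k1 (h1 x)) (fun v => k2 (h2 v)).
Proof.
move=> [hM [hV [h1e [hD [h0 [hN [hZ hA]]]]]]] [kM [kV [k1e [kD [k0 [kN [kZ kA]]]]]]].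
by do !split => *; rewrite ?hM ?hV ?h1e ?hD ?h0 ?hN ?hZ ?hA ?kM ?kV ?k1e ?kD ?k0 ?kN ?kZ ?kA.
Qed.

Definition trivV_rep k (Z : zmodType) : rep k :=
  @Rep k Z (fun x y => x + y) (fun x => - x) 0 (@addrA Z) (@add0r Z) (@addr0 Z)
    (@addNr Z) (@subrr Z) 'M[k]_(0,0) (fun _ v => v)
    (fun _ _ _ => erefl) (fun _ _ _ => erefl) (fun _ _ _ => erefl) (fun _ => erefl).

Lemma unit_all (x : unit) : x = tt. Proof. by case: x. Qed.

Definition Brep k : rep k :=
  @Rep k unit (fun _ _ => tt) (fun _ => tt) tt (fun _ _ _ => erefl)
    (fun x => esym (unit_all x)) (fun x => esym (unit_all x)) (fun _ => erefl) (fun _ => erefl)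
    k^o (fun _ v => v)
    (fun _ _ _ => erefl) (fun _ _ _ => erefl) (fun _ _ _ => erefl) (fun _ => erefl).


Fixpoint gpow k (A : rep k) (x : G A) (n : nat) : G A :=
  match n with 0%N => gone A | n'.+1 => gmul (gpow x n') x end.

Definition gz k (A : rep k) (g : G A) (z : int) : G A :=
  match z with Posz n => gpow g n | Negz n => gpow (ginv g) n.+1 end.

Lemma gzS k (A : rep k) (g : G A) z : gz g (z + 1) = gmul (gz g z) g.
Proof.
case: z => [n|[|n]].
- by have -> : Posz n + 1 = Posz n.+1 by lia.
- have -> : Negz 0 + 1 = 0 by lia.
  by rewrite /= gmul1g gmulVg.
- have -> : Negz n.+1 + 1 = Negz n by lia.
  by rewrite /= -gmulA gmulVg gmulg1.
Qed.

Lemma gzP k (A : rep k) (g : G A) z : gz g (z - 1) = gmul (gz g z) (ginv g).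
Proof.
have := gzS g (z - 1); rewrite subrK => ->.
by rewrite -gmulA gmulgV gmulg1.
Qed.

Lemma gzD k (A : rep k) (g : G A) a b : gz g (a + b) = gmul (gz g a) (gz g b).
Proof.
case: b => n.
- elim: n => [|n IH]; first by rewrite addr0 /= gmulg1.
  have -> : a + Posz n.+1 = (a + Posz n) + 1 by lia.
  by rewrite gzS IH /= gmulA.
- elim: n => [|n IH].
    have -> : a + Negz 0 = a - 1 by lia.
    by rewrite gzP /= gmul1g.
  have -> : a + Negz n.+1 = (a + Negz n) - 1 by lia.
  by rewrite gzP IH -gmulA.
Qed.

Lemma gzN k (A : rep k) (g : G A) z : gz g (- z) = ginv (gz g z).
Proof. by apply: ginv_uniq; rewrite -gzD addNr. Qed.

Lemma gz_mul k (A : rep k) (g : G A) (N : nat) : gz g (Posz N) = gone A ->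
  forall q : int, gz g (q * Posz N) = gone A.
Proof.
move=> hN.
have hP : forall n : nat, gz g (Posz n * Posz N) = gone A.
  elim=> [|n IH]; first by rewrite mul0r.
  have -> : Posz n.+1 * Posz N = Posz n * Posz N + Posz N by lia.
  by rewrite gzD IH hN gmul1g.
case=> n; first exact: hP.
have -> : Negz n * Posz N = - (Posz n.+1 * Posz N) by lia.
by rewrite gzN hP ginv1.
Qed.

Lemma geval_ext k (A : rep k) (e e' : nat -> G A) t : (forall i, e i = e' i) ->
  geval e t = geval e' t.
Proof. by move=> h; elim: t => [i|s IHs u IHu|s IHs|] //=; rewrite ?IHs ?IHu. Qed.

Lemma exists_N k (A : rep k) (g : G A) : g <> gone A ->
  exists N' : nat, forall z : int, gz g z = gone A -> (Posz N'.+2 %| z)%Z.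
Proof.
move=> hg.
case: (classic (exists n, (0 < n)%N /\ gpow g n = gone A)) => [ex|nex].
- pose P := fun n => (0 < n)%N &&
     (if excluded_middle_informative (gpow g n = gone A) then true else false).
  have exP : exists n, P n.
    case: ex => n [n0 hn]; exists n; rewrite /P n0.
    by case: excluded_middle_informative.
  case: (ex_minnP exP) => N hPN hmin.
  move: hPN; rewrite /P; case: excluded_middle_informative => hN; last by rewrite andbF.
  rewrite andbT => N0.
  have N1 : N <> 1%N by move=> E; apply: hg; rewrite -hN E /= gmul1g.
  exists N.-2; have -> : N.-2.+2 = N by lia.
  move=> z hz.
  have hNz : gz g (Posz N) = gone A by [].
  have r0 : 0 <= (z %% Posz N)%Z by apply: modz_ge0; lia.
  have rN : (z %% Posz N)%Z < Posz N by apply: ltz_pmod; lia.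
  have hr : gz g (z %% Posz N)%Z = gone A.
    by move: hz; rewrite {1}(divz_eq z (Posz N)) gzD gz_mul // gmul1g.
  have r_eq0 : (z %% Posz N)%Z = 0.
    move: r0 rN hr; case: (z %% Posz N)%Z => [[|r]|r] //= _ rN hr.
    have := hmin r.+1; rewrite /P; case: excluded_middle_informative => // _ /(_ isT).
    lia.
  apply/dvdzP; exists (z %/ Posz N)%Z.
  by rewrite {1}(divz_eq z (Posz N)) r_eq0 addr0.
- exists 0%N => z hz.
  suff -> : z = 0 by apply: dvdz0.
  case: z hz => [[|n]|n] hz //; exfalso; apply: nex; exists n.+1; split => //.
  have := gzN g (Negz n); rewrite hz ginv1.
  by have -> : - Negz n = Posz n.+1 by lia.
Qed.

Lemma natN (N : nat) : (N.+2)%:R = 0 :> 'I_N.+2.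
Proof. apply/val_inj. rewrite Zp_nat /=. by rewrite modnn. Qed.

Lemma T_in_variety k Ids (A : rep k) (g : G A) (N' : nat) : in_variety Ids A ->
  (forall z : int, gz g z = gone A -> (Posz N'.+2 %| z)%Z) ->
  in_variety Ids (trivV_rep k 'I_N'.+2).
Proof.
move=> HA hN [s t|s t] /(HA _) /= H; last first.
  by move=> e1 e2; rewrite [LHS]flatmx0 [RHS]flatmx0.
move=> e.
pose a : nat -> int := fun i => Posz (e i : nat).
have hgM : forall x y : G (trivV_rep k int), gz g (gmul x y) = gmul (gz g x) (gz g y).
  by move=> x y; apply: gzD.
have hgV : forall x : G (trivV_rep k int), gz g (ginv x) = ginv (gz g x).
  by move=> x; apply: gzN.
have hg1 : gz g (gone (trivV_rep k int)) = gone A by [].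
have H1 := H (fun i => gz g (a i)).
rewrite -!(geval_morph hgM hgV hg1) in H1.
set Ls := geval (A:=trivV_rep k int) a s in H1; set Lt := geval (A:=trivV_rep k int) a t in H1.
have hd : gz g (Ls - Lt) = gone A.
  by apply: (@gcancel_r _ _ _ _ (gz g Lt)); rewrite -gzD subrK gmul1g.
case/dvdzP: (hN _ hd) => q hq.
pose pi : G (trivV_rep k int) -> G (trivV_rep k 'I_N'.+2) := fun z : int => (z%:~R : 'I_N'.+2).
have pM : forall x y : G (trivV_rep k int), pi (gmul x y) = gmul (pi x) (pi y).
  by move=> x y; rewrite /pi /= intrD.
have pV : forall x : G (trivV_rep k int), pi (ginv x) = ginv (pi x).
  by move=> x; rewrite /pi /= intrN.
have p1 : pi (gone (trivV_rep k int)) = gone (trivV_rep k 'I_N'.+2) by [].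
have he : forall i, (e i : G (trivV_rep k 'I_N'.+2)) = pi (a i) by move=> i; rewrite /pi /a /= -[LHS]natr_Zp.
rewrite (geval_ext (A:=trivV_rep k 'I_N'.+2) s he) (geval_ext (A:=trivV_rep k 'I_N'.+2) t he) -!(geval_morph pM pV p1).
rewrite -/Ls -/Lt /pi.
have -> : Ls = Lt + q * Posz N'.+2 by rewrite -hq addrC subrK.
rewrite intrD intrM /=. have -> : (Posz N'.+2)%:~R = (N'.+2)%:R :> 'I_N'.+2 by []. by rewrite natN mulr0 addr0.
Qed.

Lemma transfer k Ids (F F' A : rep k) m' n' z1 z2 (h1 : G F -> G F') (h2 : V F -> V F')
    (h1' : G F' -> G F) (h2' : V F' -> V F) :
  is_free Ids F' m' n' z1 z2 -> in_variety Ids A -> is_hom h1' h2' ->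
  (forall x, h1' (h1 x) = x) -> (forall v, h2' (h2 v) = v) ->
  forall (H1 K1 : G F -> G A) (H2 K2 : V F -> V A), is_hom H1 H2 -> is_hom K1 K2 ->
  (forall j, H1 (h1' (z1 j)) = K1 (h1' (z1 j))) ->
  (forall j, H2 (h2' (z2 j)) = K2 (h2' (z2 j))) ->
  (forall x, H1 x = K1 x) /\ (forall v, H2 v = K2 v).
Proof.
move=> [_ [_ [_ hF]]] HA hh' c1 c2 H1 K1 H2 K2 hH hK e1 e2.
have [_ U] := hF A HA (fun j => H1 (h1' (z1 j))) (fun j => H2 (h2' (z2 j))).
have [u1 u2] := U _ _ _ _ (hom_comp hh' hH) (hom_comp hh' hK) (fun _ => erefl)
  (fun _ => erefl) (fun j => esym (e1 j)) (fun j => esym (e2 j)).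
by split=> x; [rewrite -(c1 x) u1 | rewrite -(c2 x) u2].
Qed.

Lemma m_le k Ids (F F' : rep k) m n m' n' y1 y2 z1 z2 :
  nondegenerate_variety Ids -> is_free Ids F m n y1 y2 -> is_free Ids F' m' n' z1 z2 ->
  rep_iso F F' -> (m <= m')%N /\ (n <= n')%N.
Proof.
move=> [ndG ndV] fF fF' [h1 [h2 [h1' [h2' [hh [hh' [c1 [_ [c2 _]]]]]]]]].
split.
- have [A1 [HA1 nh]] : exists A, in_variety Ids A /\ ~ holds A (IdG k (GVar 0) (GVar 1)).
    apply: NNPP => nx; apply: ndG => A HA; apply: NNPP => nh; apply: nx; by exists A.
  have [e1 ne] : exists e1 : nat -> G A1, e1 0%N <> e1 1%N.
    apply: NNPP => nx; apply: nh => e1 /=; apply: NNPP => ne; apply: nx; by exists e1.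
  have [g hg] : exists g : G A1, g <> gone A1.
    case: (classic (e1 0%N = gone A1)) => E; [exists (e1 1%N) | exists (e1 0%N)] => //.
    by move=> E'; apply: ne; rewrite E E'.
  have [N' hN] := exists_N hg.
  have HT := T_in_variety HA1 hN.
  have ch : forall f : {ffun 'I_m -> 'I_N'.+2},
      {H : (G F -> G (trivV_rep k 'I_N'.+2)) * (V F -> V (trivV_rep k 'I_N'.+2)) |
        is_hom H.1 H.2 /\ forall i, H.1 (y1 i) = f i}.
    move=> f; apply: constructive_indefinite_description.
    case: fF => [_ [_ [_ hF]]].
    have [[H1 [H2 [hH [e1' _]]]] _] := hF _ HT f (fun _ => 0).
    by exists (H1, H2).
  pose Phi := fun f => [ffun j => (sval (ch f)).1 (h1' (z1 j)) : 'I_N'.+2]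
     : {ffun 'I_m' -> 'I_N'.+2}.
  have inj : injective Phi.
    move=> f f' /ffunP E; apply/ffunP => i.
    have E' : forall j, (sval (ch f)).1 (h1' (z1 j)) = (sval (ch f')).1 (h1' (z1 j)).
      by move=> j; have := E j; rewrite !ffunE.
    move: E'; case: (ch f) => [[H1 H2] [hH eH]]; case: (ch f') => [[K1 K2] [hK eK]] /= E'.
    have [u _] := transfer fF' HT hh' c1 c2 hH hK E'
      (fun j => etrans (flatmx0 _) (esym (flatmx0 _))).
    by rewrite -eH u eK.
  by have := leq_card Phi inj; rewrite !card_ffun !card_ord leq_exp2l.
- have [A2 [HA2 nh]] : exists A, in_variety Ids A /\ ~ holds A (IdV (VVar k 0) (VVar k 1)).
    apply: NNPP => nx; apply: ndV => A HA; apply: NNPP => nh; apply: nx; by exists A.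
  have [e1 [e2 ne]] : exists (e1 : nat -> G A2) (e2 : nat -> V A2), e2 0%N <> e2 1%N.
    apply: NNPP => nx; apply: nh => e1 e2 /=; apply: NNPP => ne; apply: nx; by exists e1, e2.
  pose v := e2 0%N - e2 1%N.
  have v0 : v != 0 by rewrite subr_eq0; apply/eqP.
  have HB : in_variety Ids (Brep k).
    apply: (@variety_embed _ _ A2 (Brep k) (fun _ => gone A2) (fun l : k^o => l *: v)) => //.
    - split; first by move=> *; rewrite gmul1g.
      split; first by move=> *; rewrite ginv1.
      split; first by [].
      split; first by move=> *; rewrite scalerDl.
      split; first by rewrite scale0r.
      split; first by move=> *; rewrite scaleNr.
      split; first by move=> l x; rewrite scalerA.
      by move=> *; rewrite act1.
    - by move=> x y; rewrite (unit_all x) (unit_all y).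
    - move=> l l' /eqP; rewrite -subr_eq0 -scalerBl scaler_eq0 (negbTE v0) orbF subr_eq0.
      by move/eqP.
  have ch : forall f : 'rV[k]_n,
      {H : (G F -> G (Brep k)) * (V F -> V (Brep k)) |
        is_hom H.1 H.2 /\ forall j, H.2 (y2 j) = f 0 j}.
    move=> f; apply: constructive_indefinite_description.
    case: fF => [_ [_ [_ hF]]].
    have [[H1 [H2 [hH [_ e2']]]] _] := hF _ HB (fun _ => tt) (fun j => f 0 j).
    by exists (H1, H2).
  pose Psi := fun f => \row_j ((sval (ch f)).2 (h2' (z2 j)) : k) : 'rV[k]_n'.
  have inj : injective Psi.
    move=> f f' /rowP E; apply/rowP => j.
    have E' : forall j, (sval (ch f)).2 (h2' (z2 j)) = (sval (ch f')).2 (h2' (z2 j)).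
      by move=> i; have := E i; rewrite !mxE.
    move: E'; case: (ch f) => [[H1 H2] [hH eH]]; case: (ch f') => [[K1 K2] [hK eK]] /= E'.
    have [_ u] := transfer fF' HB hh' c1 c2 hH hK
      (fun j => etrans (unit_all _) (esym (unit_all _))) E'.
    by rewrite -eH u eK.
  have sc : forall (l : k) (x : k^o), l *: x = l * x by [].
  have lin : forall a f f', Psi (a *: f + f') = a *: Psi f + Psi f'.
    move=> a f f'; apply/rowP => j; rewrite !mxE.
    case: (ch (a *: f + f')) => [[H1 H2] [hH eH]].
    case: (ch f) => [[K1 K2] [hK eK]]; case: (ch f') => [[L1 L2] [hL eL]] /=.
    simpl in hK, hL, hH, eH, eK, eL.
    pose M2 := fun w => (a * K2 w + L2 w : k^o).
    have hM : is_hom (B:=Brep k) (fun _ : G F => tt) M2.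
      case: hK => [_ [_ [_ [kD [k0 [kN [kZ kA]]]]]]].
      case: hL => [_ [_ [_ [lD [l0 [lN [lZ lA]]]]]]].
      do 3 (split; first by []).
      split; first by move=> x y; rewrite /M2 kD lD; ring.
      split; first by rewrite /M2 k0 l0; ring.
      split; first by move=> x; rewrite /M2 kN lN; ring.
      split; first by move=> l x; rewrite /M2 kZ lZ !sc; ring.
      by move=> g x; rewrite /M2 kA lA.
    case: fF => [_ [_ [_ hF]]].
    have [_ U] := hF _ HB (fun _ => tt) (fun j => (a *: f + f') 0 j).
    have [_ u] := U _ _ _ _ hH hM (fun _ => unit_all _) eH (fun _ => unit_all _)
      (fun j => ltac:(by rewrite /M2 eK eL !mxE)).
    by rewrite u.
  have PsiD : forall f f', Psi (f + f') = Psi f + Psi f'.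
    by move=> f f'; have := lin 1 f f'; rewrite !scale1r.
  have Psi0 : Psi 0 = 0.
    have := PsiD 0 0; rewrite addr0 -{1}[Psi 0]addr0 => /addrI.
    by move=> ->.
  have PsiZ : forall a f, Psi (a *: f) = a *: Psi f.
    by move=> a f; rewrite -[a *: f]addr0 lin Psi0 addr0.
  pose M := \matrix_(i < n) Psi (delta_mx 0 i).
  have hM : forall u, u *m M = Psi u.
    move=> u; rewrite mulmx_sum_row {2}(row_sum_delta u).
    rewrite (big_morph Psi PsiD Psi0); apply: eq_bigr => i _.
    by rewrite rowK PsiZ.
  have rf : row_free M.
    by apply: inj_row_free => w; rewrite hM -Psi0 => /inj.
  by have := rank_leq_col M; rewrite (eqP rf).
Qed.

End Aux.

Theorem mainTheorem20 (k : fieldType) (Ids : identity k -> Prop) :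
  nondegenerate_variety Ids -> IBN_variety Ids.
Proof.
move=> nd F F' m n m' n' y1 y2 z1 z2 fF fF' iso.
have [a b] := m_le nd fF fF' iso.
have iso' : rep_iso F' F.
  case: iso => [h1 [h2 [h1' [h2' [p [q [r [s [t u]]]]]]]]].
  by exists h1', h2', h1, h2.
have [c d] := m_le nd fF' fF iso'.
by split; apply/eqP; rewrite eqn_leq ?a ?b ?c ?d.
Qed.
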